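(* Let $\Omega\subset\mathbb R^n$ be a $C^2$ domain, $x\in\partial\Omega$, and let $\mathbf e_1(x),\dots,\mathbf e_{n-1}(x)$ be an orthonormal eigenbasis of the shape operator of $\partial\Omega$ at $x$ with principal curvatures $\kappa_1(x),\dots,\kappa_{n-1}(x)$, i.e. $\partial_{\mathbf e_j(x)}\nu(x)=\kappa_j(x)\mathbf e_j(x)$. Then for every $u\in F$ with $\mathbb B(\nu(x))u=0$, $$\langle u,L_B(x)u\rangle=\sum_{j=1}^{n-1}\kappa_j(x)\,|\mathbb B(\mathbf e_j(x))u|^2 .$$
   Context: $E,F$ are finite-dimensional real or complex inner product spaces ($\langle\cdot,\cdot\rangle$ the real part of the inner product in the complex case). $B_1,\dots,B_n\in\mathcal L(F,E)$, $\mathbb B(\xi)=\sum_j\xi_jB_j$ for $\xi\in\mathbb R^n$, $e_1,\dots,e_n$ the standard basis. $\nu$ is the outward unit normal of $\Omega$, $N$ any $C^1$ extension of $\nu$ to a neighbourhood of $\partial\Omega$, and $L_B(x):=\sum_{j=1}^n\mathbb B(e_j)^*\mathbb B(\partial_jN(x))$ (generalized Levi matrix). *)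

(* Defs.v *)
From HB Require Import structures.
From mathcomp Require Import all_boot all_order all_algebra.
From mathcomp Require Import all_classical all_reals all_analysis.
From mathcomp Require Import complex.

Set Implicit Arguments.
Unset Strict Implicit.
Unset Printing Implicit Defensive.

Import Order.TTheory GRing.Theory Num.Theory.
Import numFieldNormedType.Exports.
Local Open Scope classical_set_scope.
Local Open Scope ring_scope.

Section Geometry.
Variables (R : realType) (n : nat).
Local Notation vec := 'rV[R]_n.

Definition stdb (i : 'I_n) : vec := delta_mx 0 i.

Definition rdot (v w : vec) : R := (v *m w^T) 0 0.
Definition enorm (v : vec) : R := Num.sqrt (rdot v v).

Definition bdry (A : set vec) : set vec := closure A `\` interior A.

Definition grad (f : vec -> R) (y : vec) : vec := \row_i derive f y (stdb i).

Definition C1_on (W : normedModType R) (U : set vec) (f : vec -> W) : Prop :=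
  (forall y, U y -> differentiable f y) /\
  (forall v : vec, {within U, continuous (fun y => 'd f y v)}).

Definition C2_on (U : set vec) (f : vec -> R) : Prop :=
  C1_on U f /\ (forall v : vec, C1_on U (fun y => 'd f y v)).

Definition local_defining_function (Om : set vec) (p : vec) (r : R)
    (rho : vec -> R) : Prop :=
  0 < r /\ C2_on (ball p r) rho /\
  (forall y, ball p r y -> (Om y <-> rho y < 0)) /\
  (forall y, ball p r y -> rho y = 0 -> grad rho y != 0).

Definition C2_domain (Om : set vec) : Prop :=
  open Om /\
  forall p, bdry Om p -> exists r rho, local_defining_function Om p r rho.

Definition outward_unit_normal (Om : set vec) (nu : vec -> vec) : Prop :=
  forall p, bdry Om p -> forall r rho, local_defining_function Om p r rho ->
    nu p = (enorm (grad rho p))^-1 *: grad rho p.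

Definition C1_extension (Om : set vec) (nu N : vec -> vec) : Prop :=
  exists V : set vec, open V /\ bdry Om `<=` V /\ C1_on V N /\
    (forall p, bdry Om p -> N p = nu p).

(** the derivative of nu (a function on the boundary) at x in the tangent
    direction v equals w: computed along a curve in the boundary *)
Definition bdry_dir_deriv (Om : set vec) (nu : vec -> vec) (x v w : vec) : Prop :=
  exists (gam : R -> vec) (d : R), 0 < d /\
    (forall t, `|t| < d -> bdry Om (gam t)) /\ gam 0 = x /\
    derivable gam 0 1 /\ derive gam 0 1 = v /\
    derivable (nu \o gam) 0 1 /\ derive (nu \o gam) 0 1 = w.

Definition principal_frame (Om : set vec) (nu : vec -> vec) (x : vec)
    (e : 'I_n.-1 -> vec) (kappa : 'I_n.-1 -> R) : Prop :=
  (forall j k, rdot (e j) (e k) = (j == k)%:R) /\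
  (forall j, rdot (e j) (nu x) = 0) /\
  (forall j, bdry_dir_deriv Om nu x (e j) (kappa j *: e j)).

End Geometry.

Section Algebra.
(** Scalars K (R or C), embedding of reals, conjugation, real part.
    F = K^p, E = K^m with the standard inner product Re (u^* v). *)
Variables (R : realType) (K : pzRingType) (emb : R -> K) (cj : K -> K)
  (re : K -> R).

Definition adj (m p : nat) (A : 'M[K]_(m, p)) : 'M[K]_(p, m) := (map_mx cj A)^T.

Definition ip (p : nat) (u w : 'cV[K]_p) : R := re ((adj u *m w) 0 0).

Definition sqn (p : nat) (u : 'cV[K]_p) : R := ip u u.

Definition BB (n m p : nat) (B : 'I_n -> 'M[K]_(m, p)) (xi : 'rV[R]_n) :
    'M[K]_(m, p) := \sum_(j < n) emb (xi 0 j) *: B j.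

Definition LeviB (n m p : nat) (B : 'I_n -> 'M[K]_(m, p))
    (N : 'rV[R]_n -> 'rV[R]_n) (x : 'rV[R]_n) : 'M[K]_p :=
  \sum_(j < n) adj (BB B (stdb R j)) *m BB B (derive N x (stdb R j)).

Definition levi_identity (n : nat) (nu N : 'rV[R]_n -> 'rV[R]_n) (x : 'rV[R]_n)
    (e : 'I_n.-1 -> 'rV[R]_n) (kappa : 'I_n.-1 -> R) : Prop :=
  forall (m p : nat) (B : 'I_n -> 'M[K]_(m, p)) (u : 'cV[K]_p),
    BB B (nu x) *m u = 0 ->
    ip u (LeviB B N x *m u) = \sum_(j < n.-1) kappa j * sqn (BB B (e j) *m u).

End Algebra.

(* Main.v *)
Require Import Defs.
From HB Require Import structures.
From mathcomp Require Import all_boot all_order all_algebra.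
From mathcomp Require Import all_classical all_reals all_analysis.
From mathcomp Require Import complex.
Import Order.TTheory GRing.Theory Num.Theory.
Import numFieldNormedType.Exports.
Local Open Scope classical_set_scope.
Local Open Scope ring_scope.
Section LinR.
Variables (R : realType) (n : nat).
Local Notation vec := 'rV[R]_n.

Lemma lin_sum (g : vec -> R) :
  (forall a v1 v2, g (a *: v1 + v2) = a * g v1 + g v2) ->
  forall c : 'I_n -> R, g (\sum_i c i *: stdb R i) = \sum_i c i * g (stdb R i).
Proof.
move=> hg c.
have g0 : g 0 = 0.
  have := hg 1 0 0; rewrite scaler0 addr0 mul1r => h.
  by apply/(addrI (g 0)); rewrite addr0 -h.
have gD : {morph g : x y / x + y}.
  by move=> x y; rewrite -[x]scale1r hg mul1r scale1r.
rewrite (big_morph g gD g0); apply: eq_bigr => i _.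
by rewrite -[_ *: _]addr0 hg g0 addr0.
Qed.

Lemma trace_inv (Psi : vec -> vec -> R) (Q : 'M[R]_n) :
  (forall a v1 v2 w, Psi (a *: v1 + v2) w = a * Psi v1 w + Psi v2 w) ->
  (forall a v w1 w2, Psi v (a *: w1 + w2) = a * Psi v w1 + Psi v w2) ->
  Q^T *m Q = 1%:M ->
  \sum_k Psi (row k Q) (row k Q) = \sum_a Psi (stdb R a) (stdb R a).
Proof.
move=> hl hr hQ.
have ex k : Psi (row k Q) (row k Q) =
   \sum_a \sum_b (Q k a * Q k b) * Psi (stdb R a) (stdb R b).
  rewrite {1}(row_sum_delta (row k Q)).
  rewrite (@lin_sum (fun v => Psi v _) (fun a v1 v2 => hl a v1 v2 _) (fun i => row k Q 0 i)).
  apply: eq_bigr => a _.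
  rewrite [X in Psi _ X](row_sum_delta (row k Q)).
  rewrite (@lin_sum (fun v => Psi _ v) (fun a v1 v2 => hr a _ v1 v2) (fun i => row k Q 0 i)).
  rewrite mulr_sumr; apply: eq_bigr => b _.
  by rewrite !mxE mulrA.
rewrite (eq_bigr _ (fun k _ => ex k)) exchange_big /=.
apply: eq_bigr => a _; rewrite exchange_big /=.
have -> : \sum_b \sum_k (Q k a * Q k b) * Psi (stdb R a) (stdb R b)
   = \sum_b ((a == b)%:R * Psi (stdb R a) (stdb R b)).
  apply: eq_bigr => b _; rewrite -mulr_suml; congr (_ * _).
  have : (Q^T *m Q) a b = (a == b)%:R by rewrite hQ mxE.
  by rewrite mxE => <-; apply: eq_bigr => k _; rewrite mxE.
rewrite (bigD1 a) //= eqxx mul1r big1 ?addr0 //.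
by move=> b hb; rewrite eq_sym (negbTE hb) mul0r.
Qed.
End LinR.
Section Rdot.
Variables (R : realType) (n : nat).
Implicit Types v w : 'rV[R]_n.
Lemma rdotE v w : rdot v w = \sum_j v 0 j * w 0 j.
Proof. by rewrite /rdot mxE; apply: eq_bigr => j _; rewrite mxE. Qed.
Lemma rdotC v w : rdot v w = rdot w v.
Proof. by rewrite !rdotE; apply: eq_bigr => j _; rewrite mulrC. Qed.
Lemma rdotZl a v w : rdot (a *: v) w = a * rdot v w.
Proof. by rewrite !rdotE mulr_sumr; apply: eq_bigr => j _; rewrite mxE mulrA. Qed.
Lemma rdot_gt0 v : v != 0 -> 0 < rdot v v.
Proof.
move=> nz; rewrite lt_def; have ge : 0 <= rdot v v.
  by rewrite rdotE sumr_ge0 // => j _; rewrite -expr2 sqr_ge0.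
rewrite ge andbT; apply/negP => /eqP h; move/negP: nz; apply; apply/eqP.
apply/rowP => j; rewrite mxE.
have := @psumr_eq0P _ _ predT (fun j => v 0 j * v 0 j).
move=> /(_ _ _ j isT); rewrite -rdotE => H.
by apply/eqP; rewrite -sqrf_eq0 expr2 H // => i _; rewrite -expr2 sqr_ge0.
Qed.
End Rdot.
Section KAlg.
Variables (R : realType) (K : comPzRingType) (emb : R -> K) (cj : K -> K) (re : K -> R).
Hypotheses (embD : forall a b, emb (a + b) = emb a + emb b)
  (embM : forall a b, emb (a * b) = emb a * emb b)
  (cjD : forall a b, cj (a + b) = cj a + cj b)
  (cjM : forall a b, cj (a * b) = cj a * cj b)
  (cjE : forall a, cj (emb a) = emb a)
  (reD : forall a b, re (a + b) = re a + re b)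
  (reM : forall a z, re (emb a * z) = a * re z).

Lemma cj0 : cj 0 = 0.
Proof. by apply/(addrI (cj 0)); rewrite -cjD !addr0. Qed.
Lemma re0 : re 0 = 0.
Proof. by apply/(addrI (re 0)); rewrite -reD !addr0. Qed.
Lemma emb0 : emb 0 = 0.
Proof. by apply/(addrI (emb 0)); rewrite -embD !addr0. Qed.

Lemma adjM m p q (A : 'M[K]_(m, p)) (B : 'M[K]_(p, q)) :
  adj cj (A *m B) = adj cj B *m adj cj A.
Proof.
apply/matrixP => i j; rewrite /adj !mxE (big_morph cj cjD cj0).
by apply: eq_bigr => k _; rewrite !mxE cjM mulrC.
Qed.

Lemma adjD m p (A B : 'M[K]_(m, p)) : adj cj (A + B) = adj cj A + adj cj B.
Proof. by apply/matrixP => i j; rewrite /adj !mxE cjD. Qed.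

Lemma adjZ m p a (A : 'M[K]_(m, p)) : adj cj (emb a *: A) = emb a *: adj cj A.
Proof. by apply/matrixP => i j; rewrite /adj !mxE cjM cjE. Qed.

Lemma ipDl p (X Y Z : 'cV[K]_p) : ip cj re (X + Y) Z = ip cj re X Z + ip cj re Y Z.
Proof. by rewrite /ip adjD mulmxDl mxE reD. Qed.
Lemma ipDr p (X Y Z : 'cV[K]_p) : ip cj re Z (X + Y) = ip cj re Z X + ip cj re Z Y.
Proof. by rewrite /ip mulmxDr mxE reD. Qed.
Lemma ipZl p a (X Z : 'cV[K]_p) : ip cj re (emb a *: X) Z = a * ip cj re X Z.
Proof. by rewrite /ip adjZ -scalemxAl mxE reM. Qed.
Lemma ipZr p a (X Z : 'cV[K]_p) : ip cj re Z (emb a *: X) = a * ip cj re Z X.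
Proof. by rewrite /ip -scalemxAr mxE reM. Qed.
Lemma ip0l p (Z : 'cV[K]_p) : ip cj re 0 Z = 0.
Proof.
rewrite /ip [adj _ _](_ : _ = 0) ?mul0mx ?mxE ?re0 //.
by apply/matrixP => i j; rewrite /adj !mxE cj0.
Qed.

Lemma BBlin n m p (B : 'I_n -> 'M[K]_(m, p)) a (v w : 'rV[R]_n) :
  BB emb B (a *: v + w) = emb a *: BB emb B v + BB emb B w.
Proof.
rewrite /BB scaler_sumr -big_split; apply: eq_bigr => j _ /=.
by rewrite !mxE embD embM scalerDl scalerA.
Qed.

Lemma ip0r p (Z : 'cV[K]_p) : ip cj re Z 0 = 0.
Proof. by rewrite /ip mulmx0 mxE re0. Qed.

Lemma BB0 n m p (B : 'I_n -> 'M[K]_(m, p)) : BB emb B 0 = 0.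
Proof. by rewrite /BB big1 // => j _; rewrite mxE emb0 scale0r. Qed.

Lemma BBZ n m p (B : 'I_n -> 'M[K]_(m, p)) a (v : 'rV[R]_n) :
  BB emb B (a *: v) = emb a *: BB emb B v.
Proof. by rewrite -[a *: v]addr0 BBlin BB0 addr0. Qed.

Lemma levi_core n (nu0 : 'rV[R]_n) (f : 'rV[R]_n -> 'rV[R]_n)
  (e : 'I_n.-1 -> 'rV[R]_n) (kappa : 'I_n.-1 -> R) :
  nu0 != 0 ->
  (forall j k, rdot (e j) (e k) = (j == k)%:R) ->
  (forall j, rdot (e j) nu0 = 0) ->
  (forall a v w, f (a *: v + w) = a *: f v + f w) ->
  (forall j, f (e j) = kappa j *: e j) ->
  forall m p (B : 'I_n -> 'M[K]_(m, p)) (u : 'cV[K]_p),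
    BB emb B nu0 *m u = 0 ->
    ip cj re u ((\sum_(j < n) adj cj (BB emb B (stdb R j)) *m BB emb B (f (stdb R j))) *m u)
    = \sum_(j < n.-1) kappa j * sqn cj re (BB emb B (e j) *m u).
Proof.
case: n => [|k] in nu0 f e kappa *.
  by move=> /negP []; apply/eqP/rowP => [[]].
move=> nz he hen hf hfe m p B u hnu.
pose Psi v w := ip cj re (BB emb B v *m u) (BB emb B (f w) *m u).
have -> : ip cj re u ((\sum_(j < k.+1) adj cj (BB emb B (stdb R j)) *m BB emb B (f (stdb R j))) *m u)
   = \sum_j Psi (stdb R j) (stdb R j).
  rewrite mulmx_suml (big_morph (ip cj re u) (fun x y => @ipDr p x y u) (@ip0r p u)).
  by apply: eq_bigr => j _; rewrite /Psi /ip -!mulmxA mulmxA -adjM.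
pose c := (Num.sqrt (rdot nu0 nu0))^-1.
pose qv (i : 'I_k.+1) := if unlift ord0 i is Some j then e j else c *: nu0.
pose Q : 'M[R]_k.+1 := \matrix_(i, j) qv i 0 j.
have rowQ i : row i Q = qv i by apply/rowP => j; rewrite !mxE.
have hpos := @rdot_gt0 R _ _ nz.
have hc : c * (c * rdot nu0 nu0) = 1.
  rewrite mulrA -expr2 /c exprVn sqr_sqrtr ?ltW // mulVf //.
  by rewrite gt_eqF.
have QQ : Q^T *m Q = 1%:M.
  apply: mulmx1C; apply/matrixP => a b.
  have -> : (Q *m Q^T) a b = rdot (qv a) (qv b).
    by rewrite rdotE mxE; apply: eq_bigr => j _; rewrite !mxE.
  rewrite mxE /qv.
  case: unliftP => [ja ->|->]; case: unliftP => [jb ->|->].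
  - by rewrite he (inj_eq lift_inj).
  - by rewrite rdotC rdotZl rdotC hen mulr0 eq_sym (negbTE (neq_lift _ _)).
  - by rewrite rdotZl rdotC hen mulr0 (negbTE (neq_lift _ _)).
  - by rewrite rdotZl rdotC rdotZl hc eqxx.
rewrite -(@trace_inv R _ Psi Q _ _ QQ); last 2 first.
- move=> a v1 v2 w; rewrite /Psi BBlin mulmxDl -scalemxAl.
  by rewrite ipDl ipZl.
- move=> a v w1 w2; rewrite /Psi hf BBlin mulmxDl -scalemxAl.
  by rewrite ipDr ipZr.
rewrite big_ord_recl.
rewrite rowQ /qv unlift_none.
rewrite {1}/Psi BBZ -scalemxAl hnu scaler0 ip0l add0r.
apply: eq_bigr => j _; rewrite rowQ /qv liftK /Psi hfe BBZ -scalemxAl ipZr.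
by [].
Qed.
End KAlg.
Section Geo.
Variables (R : realType) (n : nat).
Local Notation vec := 'rV[R]_n.

Lemma rho_bdry0 (Om : set vec) x r rho :
  local_defining_function Om x r rho -> bdry Om x -> rho x = 0.
Proof.
move=> [r0 [[[hd _] _] [hom _]]] [hcl hint].
have bx : ball x r x by exact: ballxx.
have hc : {for x, continuous rho} by apply: differentiable_continuous; exact: hd.
have nb := nbhsx_ballx x r r0.
apply/eqP; rewrite eq_le; apply/andP; split.
  rewrite leNgt; apply/negP => pos.
  have nr : \forall y \near x, ball (rho x) (rho x) (rho y).
    exact: hc (nbhsx_ballx (rho x) (rho x) pos).
  have [y [Omy [by1 by2]]] := hcl _ (filterI nb nr).
  move: by2; rewrite /ball /= => h.
  have : rho y < 0 by apply/(hom y by1).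
  have : 0 < rho y.
    move: h; rewrite ltr_norml => /andP[_]; rewrite ltrBlDl -ltrBlDr subrr.
    by [].
  by move=> a b; move: (lt_trans a b); rewrite ltxx.
rewrite leNgt; apply/negP => neg.
apply: hint.
have nr : \forall y \near x, ball (rho x) (- rho x) (rho y).
  by apply: hc; apply: nbhsx_ballx; rewrite oppr_gt0.
rewrite /interior /=.
near=> y; apply/(hom y); first by near: y.
have : ball (rho x) (- rho x) (rho y) by near: y.
rewrite /ball /= ltr_norml => /andP[h _].
by move: h; rewrite opprK ltrBrDl -ltrBrDr addrN.
Unshelve. all: by end_near.
Qed.
End Geo.
Section Geo2.
Variables (R : realType) (n : nat).
Local Notation vec := 'rV[R]_n.

Lemma nu_nz (Om : set vec) nu x :
  C2_domain Om -> outward_unit_normal Om nu -> bdry Om x -> nu x != 0.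
Proof.
move=> [_ hOm] hnu bx.
have [r [rho hl]] := hOm x bx.
rewrite (hnu x bx r rho hl).
have g0 : grad rho x != 0.
  case: (hl) => r0 [_ [_ hg]]; apply: hg; first exact: ballxx.
  exact: rho_bdry0 hl bx.
have pos := @rdot_gt0 R _ _ g0.
rewrite scaler_eq0 negb_or g0 andbT invr_eq0 /enorm.
by rewrite sqrtr_eq0 -ltNge.
Qed.

Lemma dN_frame (Om : set vec) nu N x v w :
  C1_extension Om nu N -> bdry Om x -> bdry_dir_deriv Om nu x v w ->
  differentiable N x /\ 'd N x v = w.
Proof.
move=> [V [_ [sV [[hdN _] hNnu]]]] bx [gam [d [d0 [hb [g0 [dg [dgv [_ dnv]]]]]]]].
have dNx : differentiable N x by apply: hdN; exact: sV.
split=> //.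
have dg' : differentiable gam 0 by apply/derivable1_diffP.
have dNg : differentiable N (gam 0) by rewrite g0.
rewrite -dnv (@near_eq_derive _ _ _ _ (N \o gam)); last first.
  near=> t => /=; rewrite hNnu //; apply: hb; near: t; exact: (@nbhs0_lt R R d d0).
have h1 : 'D_1 (N \o gam) 0 = 'd (N \o gam) 0 1 := deriveE _ (differentiable_comp dg' dNg).
have h2 : 'd (N \o gam) 0 = 'd N (gam 0) \o 'd gam 0 :> (R -> vec) := diff_comp dg' dNg.
have h3 : 'D_1 gam 0 = 'd gam 0 1 := deriveE _ dg'.
rewrite h1 h2 /= -h3 dgv g0 //.
Unshelve. all: by end_near.
Qed.
End Geo2.
Lemma levi_gen (R : realType) (K : comPzRingType) (emb : R -> K) (cj : K -> K) (re : K -> R)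
  (embD : forall a b, emb (a + b) = emb a + emb b)
  (embM : forall a b, emb (a * b) = emb a * emb b)
  (cjD : forall a b, cj (a + b) = cj a + cj b)
  (cjM : forall a b, cj (a * b) = cj a * cj b)
  (cjE : forall a, cj (emb a) = emb a)
  (reD : forall a b, re (a + b) = re a + re b)
  (reM : forall a z, re (emb a * z) = a * re z)
  (n : nat) (Om : set 'rV[R]_n)
  (nu N : 'rV[R]_n -> 'rV[R]_n) (x : 'rV[R]_n)
  (e : 'I_n.-1 -> 'rV[R]_n) (kappa : 'I_n.-1 -> R) :
  C2_domain Om -> outward_unit_normal Om nu -> C1_extension Om nu N ->
  bdry Om x -> principal_frame Om nu x e kappa ->
  levi_identity (K := K) emb cj re nu N x e kappa.
Proof.
move=> hC2 hnu hN bx [he [hen hd]] m p B u hu.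
have nz := @nu_nz R n Om nu x hC2 hnu bx.
have dNx : differentiable N x.
  by case: (hN) => V [_ [sV [[h _] _]]]; apply: h; apply: sV.
have -> : LeviB emb cj B N x =
   \sum_j adj cj (BB emb B (stdb R j)) *m BB emb B ('d N x (stdb R j)).
  by apply: eq_bigr => j _; rewrite deriveE.
apply: (@levi_core R K emb cj re embD embM cjD cjM cjE reD reM n (nu x) ('d N x) e kappa nz he hen) => //.
  by move=> a v w; rewrite linearD linearZ.
by move=> j; have [_ ->] := @dN_frame R n Om nu N x _ _ hN bx (hd j).
Qed.
Theorem mainTheorem7 (R : realType) (n : nat) (Om : set 'rV[R]_n)
  (nu N : 'rV[R]_n -> 'rV[R]_n) (x : 'rV[R]_n)
  (e : 'I_n.-1 -> 'rV[R]_n) (kappa : 'I_n.-1 -> R) :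
  C2_domain Om -> outward_unit_normal Om nu -> C1_extension Om nu N ->
  bdry Om x -> principal_frame Om nu x e kappa ->
  (* real inner product spaces *)
  levi_identity (K := R) (fun r : R => r) (fun r : R => r) (fun r : R => r) nu N x e kappa /\
  (* complex inner product spaces, <.,.> = real part of the inner product *)
  levi_identity (K := complex.complex R) (fun r : R => complex.Complex r 0) (@complex.conjc R) (@complex.Re R)
    nu N x e kappa.
Proof.
move=> h1 h2 h3 h4 h5; split.
  by apply: (@levi_gen R R (fun r => r) (fun r => r) (fun r => r) _ _ _ _ _ _ _ n Om).
apply: (@levi_gen R (complex.complex R) (fun r : R => complex.Complex r 0) (@complex.conjc R) (@complex.Re R) _ _ _ _ _ _ _ n Om) => //.
- by move=> a b; apply/eqP; rewrite eq_complex /= addr0 !eqxx.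
- by move=> a b; apply/eqP; rewrite eq_complex /= !mul0r !mulr0 subr0 addr0 !eqxx.
- by move=> a b; rewrite rmorphD.
- by move=> a b; rewrite rmorphM.
- by move=> a; apply/eqP; rewrite eq_complex /= oppr0 !eqxx.
- by move=> [a1 b1] [a2 b2].
- by move=> a [z1 z2] /=; rewrite mul0r subr0.
Qed.
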